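(* Let $(\mathcal G,\Theta=[\cdot,\cdot,\cdot]_{\mathcal G})$ be a Lie triple system with $\mathcal G=\mathfrak g_1\oplus\mathfrak g_2$, let $H:\mathfrak g_2\to\mathfrak g_1$ be linear, and suppose both $((\mathcal G,\Theta),\mathfrak g_1,\mathfrak g_2)$ and its twisting $((\mathcal G,\Theta^H),\mathfrak g_1,\mathfrak g_2)$ are twilled Lie triple systems. Then $$[u,v,w]_H:=[u,v,w]_2+[H(u),v,w]_2+[u,H(v),w]_2+[u,v,H(w)]_2+[H(u),H(v),w]_2+[u,H(v),H(w)]_2+[H(u),v,H(w)]_2$$ for $u,v,w\in\mathfrak g_2$ defines a Lie triple system structure on $\mathfrak g_2$, where $[a,b,c]_2$ is the $\mathfrak g_2$-component of $[a,b,c]_{\mathcal G}$.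
   Context: All vector spaces are over a field of characteristic $0$. A Lie triple system is a vector space with a trilinear bracket satisfying $[x,x,y]=0$, $[x,y,z]+[y,z,x]+[z,x,y]=0$ and $[x,y,[z,w,t]]=[[x,y,z],w,t]+[z,[x,y,w],t]+[z,w,[x,y,t]]$. A twilled Lie triple system $((\mathcal G,\Theta),\mathfrak g_1,\mathfrak g_2)$ is a Lie triple system on $\mathcal G=\mathfrak g_1\oplus\mathfrak g_2$ for which $\mathfrak g_1$ and $\mathfrak g_2$ are subalgebras (closed under the bracket). Cochains: $C^p(\mathcal G,\mathcal G)=\mathrm{Hom}(\otimes^{2p+1}\mathcal G,\mathcal G)$, arguments $(\mathfrak X_1,\dots,\mathfrak X_p,x)$, $\mathfrak X_i=x_i\otimes y_i$; for $P\in C^p,Q\in C^q$, $(P\circ Q)(\mathfrak X_1,\dots,\mathfrak X_{p+q},x)=\sum_{k=1}^p(-1)^{(k-1)q}\sum_{\sigma\in\mathbb S(k-1,q)}(-1)^\sigma P(\mathfrak X_{\sigma(1)},\dots,\mathfrak X_{\sigma(k-1)},Q(\mathfrak X_{\sigma(k)},\dots,\mathfrak X_{\sigma(k+q-1)},x_{k+q})\otimes y_{k+q},\mathfrak X_{k+q+1},\dots,x)+\sum_{k=1}^p(-1)^{(k-1)q}\sum_{\sigma\in\mathbb S(k-1,q)}(-1)^\sigma P(\mathfrak X_{\sigma(1)},\dots,\mathfrak X_{\sigma(k-1)},x_{k+q}\otimes Q(\mathfrak X_{\sigma(k)},\dots,\mathfrak X_{\sigma(k+q-1)},y_{k+q}),\mathfrak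 X_{k+q+1},\dots,x)+\sum_{\sigma\in\mathbb S(p,q)}(-1)^\sigma P(\mathfrak X_{\sigma(1)},\dots,\mathfrak X_{\sigma(p)},Q(\mathfrak X_{\sigma(p+1)},\dots,\mathfrak X_{\sigma(p+q)},x))$ and $[P,Q]_{\mathsf{LTS}}=P\circ Q-(-1)^{pq}Q\circ P$. $\hat H(x,u)=(H(u),0)$, $X_{\hat H}(\cdot)=[\cdot,\hat H]_{\mathsf{LTS}}$, and the twisting is $\Theta^H=\sum_{k\ge0}\frac1{k!}X_{\hat H}^k(\Theta)$ (finite sum), again a Lie triple system bracket on $\mathcal G$. *)

(* Defs.v *)
From mathcomp Require Import all_boot all_order all_algebra.
Set Implicit Arguments. Unset Strict Implicit. Unset Printing Implicit Defensive.
Import GRing.Theory.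
Local Open Scope ring_scope.

Section LTSDefs.
Variable F : fieldType.

Definition trilinear (V : lmodType F) (t : V -> V -> V -> V) : Prop :=
  [/\ forall (a : F) x x' y z, t (a *: x + x') y z = a *: t x y z + t x' y z,
      forall (a : F) x y y' z, t x (a *: y + y') z = a *: t x y z + t x y' z &
      forall (a : F) x y z z', t x y (a *: z + z') = a *: t x y z + t x y z'].

Definition LTS (V : lmodType F) (t : V -> V -> V -> V) : Prop :=
  [/\ trilinear t,
      forall x y, t x x y = 0,
      forall x y z, t x y z + t y z x + t z x y = 0 &
      forall x y z w u,
        t x y (t z w u) = t (t x y z) w u + t z (t x y w) u + t z w (t x y u)].

(* twilled LTS on G = g1 (+) g2, modelled as the product V1 * V2 *)
Definition twilled (V1 V2 : lmodType F)
    (t : V1 * V2 -> V1 * V2 -> V1 * V2 -> V1 * V2) : Prop :=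
  [/\ LTS t,
      forall a b c : V1, (t (a, 0) (b, 0) (c, 0)).2 = 0 &
      forall u v w : V2, (t (0, u) (0, v) (0, w)).1 = 0].

Definition hatH (V1 V2 : lmodType F) (H : V2 -> V1) : V1 * V2 -> V1 * V2 :=
  fun p => (H p.2, 0).

(* X_{h}(P) = [P, h]_LTS for P in C^1, h in C^0, unfolded from the
   definition of the cochain composition (p = 1, q = 0):
   (P o h)(x,y,z) = P(h x,y,z) + P(x,h y,z) + P(x,y,h z),
   (h o P)(x,y,z) = h (P(x,y,z)),  [P,h] = P o h - h o P. *)
Definition XH (V : lmodType F) (h : V -> V) (P : V -> V -> V -> V) :
    V -> V -> V -> V :=
  fun x y z => P (h x) y z + P x (h y) z + P x y (h z) - h (P x y z).

(* twisting Theta^h = sum_k 1/k! X_h^k(Theta); for h = \hat H (h o h = 0)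
   all terms with k >= 5 vanish, so the sum is truncated at k < 5. *)
Definition twist (V : lmodType F) (h : V -> V) (t : V -> V -> V -> V) :
    V -> V -> V -> V :=
  fun x y z => \sum_(k < 5) (k`!%:R)^-1 *: iter k (XH h) t x y z.

Definition bracketH (V1 V2 : lmodType F)
    (t : V1 * V2 -> V1 * V2 -> V1 * V2 -> V1 * V2) (H : V2 -> V1) :
    V2 -> V2 -> V2 -> V2 :=
  fun u v w =>
    let i2 (x : V2) : V1 * V2 := (0, x) in
    let iH (x : V2) : V1 * V2 := (H x, 0) in
    let b (a b c : V1 * V2) := (t a b c).2 in
    b (i2 u) (i2 v) (i2 w) + b (iH u) (i2 v) (i2 w) + b (i2 u) (iH v) (i2 w)
    + b (i2 u) (i2 v) (iH w) + b (iH u) (iH v) (i2 w) + b (i2 u) (iH v) (iH w)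
    + b (iH u) (i2 v) (iH w).

End LTSDefs.

(* Main.v *)
Require Import Defs.
From mathcomp Require Import all_boot all_order all_algebra.
Import GRing.Theory.
Local Open Scope ring_scope.

Definition LH {F : fieldType} {V : lmodType F} (h : V -> V) (P : V -> V -> V -> V) :
    V -> V -> V -> V :=
  fun x y z => P (h x) y z + P x (h y) z + P x y (h z).


Lemma tri0 (F : fieldType) (V : lmodType F) (t : V -> V -> V -> V) :
  trilinear t ->
  [/\ forall y z, t 0 y z = 0, forall x z, t x 0 z = 0 & forall x y, t x y 0 = 0].
Proof.
case=> [t1 t2 t3]; split.
- move=> y z; have E := t1 1 0 0 y z; rewrite !scale1r addr0 in E.
  have : t 0 y z + 0 = t 0 y z + t 0 y z by rewrite addr0 -E.
  by move/addrI.
- move=> x z; have E := t2 1 x 0 0 z; rewrite !scale1r addr0 in E.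
  have : t x 0 z + 0 = t x 0 z + t x 0 z by rewrite addr0 -E.
  by move/addrI.
- move=> x y; have E := t3 1 x y 0 0; rewrite !scale1r addr0 in E.
  have : t x y 0 + 0 = t x y 0 + t x y 0 by rewrite addr0 -E.
  by move/addrI.
Qed.

Arguments tri0 {F V t}.

Lemma iterX2 (F : fieldType) (V1 V2 : lmodType F) (H : {linear V2 -> V1})
  (P : V1 * V2 -> V1 * V2 -> V1 * V2 -> V1 * V2) k x y z :
  (iter k (XH (hatH H)) P x y z).2 = (iter k (LH (hatH H)) P x y z).2.
Proof.
elim: k x y z => [//|k IH] x y z.
rewrite !iterS /XH /LH /=.
by rewrite !IH subr0.
Qed.

Lemma L2 (F : fieldType) (V1 V2 : lmodType F) (H : {linear V2 -> V1})
  (P : V1 * V2 -> V1 * V2 -> V1 * V2 -> V1 * V2) : trilinear P ->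
  forall x y z, iter 2 (LH (hatH H)) P x y z =
    (P (hatH H x) (hatH H y) z + P x (hatH H y) (hatH H z)
     + P (hatH H x) y (hatH H z)) *+ 2.
Proof.
move=> /tri0 [p1 p2 p3] x y z.
have hh : forall p, hatH H (hatH H p) = 0 by move=> p; rewrite /hatH /= raddf0.
rewrite /= /LH !hh !p1 !p2 !p3 !addr0 !add0r.
set A := P _ _ z; set B := P x _ _; set C := P _ y _.
rewrite mulr2n.
rewrite -!addrA; congr (A + _); rewrite [C + B]addrC [RHS]addrCA; congr (C + _).
by rewrite addrCA.
Qed.


Arguments L2 {F V1 V2 H P}.

Lemma LHE (F : fieldType) (V : lmodType F) (h : V -> V) (Q : V -> V -> V -> V) x y z :
  LH h Q x y z = Q (h x) y z + Q x (h y) z + Q x y (h z).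
Proof. by []. Qed.

Lemma L3 (F : fieldType) (V1 V2 : lmodType F) (H : {linear V2 -> V1})
  (P : V1 * V2 -> V1 * V2 -> V1 * V2 -> V1 * V2) : trilinear P ->
  forall x y z, iter 3 (LH (hatH H)) P x y z =
    P (hatH H x) (hatH H y) (hatH H z) *+ 6.
Proof.
move=> tP; have [p1 p2 p3] := tri0 tP => x y z.
have hh : forall p, hatH H (hatH H p) = 0 by move=> p; rewrite /hatH /= raddf0.
rewrite iterS LHE !(L2 tP) !hh !p1 !p2 !p3 !addr0 !add0r.
by rewrite -!mulrnDr.
Qed.

Arguments L3 {F V1 V2 H P}.

Lemma L4 (F : fieldType) (V1 V2 : lmodType F) (H : {linear V2 -> V1})
  (P : V1 * V2 -> V1 * V2 -> V1 * V2 -> V1 * V2) : trilinear P ->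
  forall x y z, iter 4 (LH (hatH H)) P x y z = 0.
Proof.
move=> tP; have [p1 p2 p3] := tri0 tP => x y z.
have hh : forall p, hatH H (hatH H p) = 0 by move=> p; rewrite /hatH /= raddf0.
by rewrite iterS LHE !(L3 tP) !hh !p1 !p2 !p3 !mul0rn !addr0.
Qed.

Arguments L4 {F V1 V2 H P}.

Lemma sum5 (V : zmodType) (f : nat -> V) :
  \sum_(k < 5) f k = f 0%N + f 1%N + f 2%N + f 3%N + f 4%N.
Proof. by rewrite !big_ord_recr big_ord0 /= add0r. Qed.

Lemma inv1s (F : fieldType) (V : lmodType F) (X : V) : (1%:R : F)^-1 *: X = X.
Proof. by have -> : (1%:R : F) = 1 by []; rewrite invr1 scale1r. Qed.

Lemma snd_add (F : fieldType) (V1 V2 : lmodType F) (p q : V1 * V2) :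
  (p + q).2 = p.2 + q.2.
Proof. by []. Qed.

Lemma snd_scale (F : fieldType) (V1 V2 : lmodType F) (a : F) (p : V1 * V2) :
  (a *: p).2 = a *: p.2.
Proof. by []. Qed.

Lemma snd_muln (F : fieldType) (V1 V2 : lmodType F) (p : V1 * V2) n :
  (p *+ n).2 = p.2 *+ n.
Proof. by elim: n => [//|n IH]; rewrite !mulrS snd_add IH. Qed.

Lemma invK (F : fieldType) (charF0 : [pchar F] =i pred0) (V : lmodType F)
  (q : V) n : (0 < n)%N -> (n%:R)^-1 *: (q *+ n) = q.
Proof.
move=> n0; rewrite -scaler_nat scalerA mulVf ?scale1r //.
by move/pcharf0P: charF0 => ->; rewrite -lt0n.
Qed.


Theorem proposition4p7 (F : fieldType) (charF0 : [pchar F] =i pred0)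
    (V1 V2 : lmodType F)
    (t : V1 * V2 -> V1 * V2 -> V1 * V2 -> V1 * V2)
    (H : {linear V2 -> V1}) :
  twilled t -> twilled (twist (hatH H) t) -> LTS (bracketH t H).
Proof.
move=> tw [lT' _ c1].
have [tt g1 _] := tw.
have [ttri _ _ _] := tt.
have key : forall u v w, bracketH t H u v w =
   (twist (hatH H) t (0, u) (0, v) (0, w)).2.
  move=> u v w.
  rewrite /twist (@sum5 _ (fun k => (k`!%:R)^-1 *: iter k (XH (hatH H)) t (0, u) (0, v) (0, w))); cbv beta.
  rewrite !snd_add !snd_scale !iterX2 (L2 ttri) (L3 ttri) (L4 ttri).
  have g1' : (t (hatH H (0,u)) (hatH H (0,v)) (hatH H (0,w))).2 = 0 := g1 _ _ _.
  have f0 : 0`! = 1%N by []. have f1 : 1`! = 1%N by [].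
  have f2 : 2`! = 2%N by []. have f3 : 3`! = 6%N by [].
  have i0 : forall (f : (V1 * V2 -> V1 * V2 -> V1 * V2 -> V1 * V2) -> _) P, iter 0 f P = P by [].
  have i1 : forall (f : (V1 * V2 -> V1 * V2 -> V1 * V2 -> V1 * V2) -> _) P, iter 1 f P = f P by [].
  have s0 : (0 : V1 * V2).2 = 0 by [].
  rewrite !snd_muln g1' mul0rn s0 !scaler0 f0 f1 f2 !invK //.
  rewrite /bracketH /hatH /= !addr0 !addrA.
  done.
set T := twist (hatH H) t in lT' c1 key.
have [[tr1 tr2 tr3] alt jac fund] := lT'.
have lin : forall (a : F) x x', ((0 : V1), a *: x + x') = a *: ((0 : V1), x) + ((0 : V1), x') :> V1 * V2.
  move=> a x x'; apply/eqP; by rewrite xpair_eqE /= scaler0 addr0 !eqxx.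
have back : forall a b c, ((0 : V1), (T (0, a) (0, b) (0, c)).2) = T (0, a) (0, b) (0, c).
  by move=> a b c; move: (c1 a b c); case: (T _ _ _) => ? ? /= ->.
split.
- split=> *; by rewrite !key lin ?tr1 ?tr2 ?tr3 snd_add snd_scale.
- by move=> x y; rewrite key alt.
- by move=> x y z; rewrite !key -!snd_add jac.
- by move=> x y z w u; rewrite !key !back -!snd_add fund.
Qed.
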